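(* Let $E$ be a nonempty closed convex subset of a real Hilbert space $H$ and let $S:E\to E$ be a $(\lambda,\gamma)$-generalized hybrid mapping for some $\lambda,\gamma\in\mathbb{R}$ with $F(S)\neq\emptyset$. Let $\{\alpha_n\}$ satisfy $0<\alpha\le\alpha_n\le 1$ for all $n$ (for some constant $\alpha>0$), and let $\{\beta_n\}$ be a sequence in $[b,1]$ for some $b\in(0,1)$ with $\liminf_{n\to\infty}\beta_n(1-\beta_n)>0$. Let $\{x_n\}$ and $\{u_n\}$ be generated by $x_1=x\in E$ and, for all $n\in\mathbb{N}$, $$u_n\in E \text{ such that } \langle y-u_n,u_n-x_n\rangle\ge 0 \quad\text{for all } y\in E,$$ $$y_n=(1-\beta_n)x_n+\beta_n Su_n,\qquad x_{n+1}=(1-\alpha_n)x_n+\alpha_n Sy_n.$$ Then $\{x_n\}$ converges weakly to a point $v\in F(S)$, where $v=\lim_{n\to\infty}P_{F(S)}(x_n)$.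
   Context: $F(S)=\{x\in E: Sx=x\}$. A mapping $S:E\to E$ is $(\lambda,\gamma)$-generalized hybrid if $\lambda\|Sx-Sy\|^2+(1-\lambda)\|x-Sy\|^2\le \gamma\|Sx-y\|^2+(1-\gamma)\|x-y\|^2$ for all $x,y\in E$. For a nonempty closed convex $K\subset H$, $P_K$ is the metric (nearest point) projection of $H$ onto $K$; the limit defining $v$ is in norm. *)

(* Defs.v *)
From HB Require Import structures.
From mathcomp Require Import all_boot all_order all_algebra.
From mathcomp Require Import all_classical all_reals all_analysis.
Set Implicit Arguments. Unset Strict Implicit. Unset Printing Implicit Defensive.
Import Order.TTheory GRing.Theory Num.Theory.
Import numFieldNormedType.Exports.
Local Open Scope classical_set_scope.
Local Open Scope ring_scope.

(* A real Hilbert space: a complete normed R-module V (R : realType) whose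
   norm is induced by a real inner product. *)
Record inner_product (R : realType) (V : completeNormedModType R) := InnerProduct {
  inner :> V -> V -> R ;
  inner_sym : forall x y, inner x y = inner y x ;
  inner_addl : forall x y z, inner (x + y) z = inner x z + inner y z ;
  inner_scalel : forall (a : R) x y, inner (a *: x) y = a * inner x y ;
  inner_norm : forall x, `|x| ^+ 2 = inner x x
}.

Definition convex {R : realType} {V : completeNormedModType R} (E : set V) :=
  forall x y (t : R), E x -> E y -> 0 <= t <= 1 -> E ((1 - t) *: x + t *: y).

Definition fixpts {T : Type} (S : T -> T) : set T := [set x | S x = x].

Definition gen_hybrid {R : realType} {V : completeNormedModType R}
  (E : set V) (S : V -> V) (lam gam : R) :=
  forall x y, E x -> E y ->
    lam * `|S x - S y| ^+ 2 + (1 - lam) * `|x - S y| ^+ 2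
    <= gam * `|S x - y| ^+ 2 + (1 - gam) * `|x - y| ^+ 2.

(* metric (nearest point) projection onto K: a nearest point of K to x
   (chosen via xget; unique when K is nonempty closed convex) *)
Definition metric_proj {R : realType} {V : completeNormedModType R}
  (K : set V) (x : V) : V :=
  xget 0 [set z | K z /\ forall w, K w -> `|x - z| <= `|x - w|].

Definition weak_cvg {R : realType} {V : completeNormedModType R}
  (ip : inner_product V) (x : nat -> V) (v : V) :=
  forall w, (fun n => ip (x n) w) @ \oo --> ip v w.

(* Main.v *)
Require Import Defs.
From HB Require Import structures.
From mathcomp Require Import all_boot all_order all_algebra.
From mathcomp Require Import all_classical all_reals all_analysis.
From mathcomp Require Import ring lra.
Import Order.TTheory GRing.Theory Num.Theory.
Import numFieldNormedType.Exports.
Local Open Scope classical_set_scope.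
Local Open Scope ring_scope.

Section Seq.
Variables (R : realType) (V : completeNormedModType R).

Lemma ev_ex (P : nat -> Prop) : (\forall n \near \oo, P n) ->
  exists N, forall n, (N <= n)%N -> P n.
Proof. by case=> N _ HN; exists N. Qed.

Lemma ex_ev (P : nat -> Prop) : (exists N, forall n, (N <= n)%N -> P n) ->
  \forall n \near \oo, P n.
Proof. by case=> N HN; exists N. Qed.

Lemma cauchy_seq (u : nat -> V) :
  (forall e : R, 0 < e -> exists N, forall m n, (N <= m)%N -> (N <= n)%N ->
     `|u m - u n| < e) -> exists l : V, u @ \oo --> l.
Proof.
move=> H.
have : cvgn u.
  apply/cauchy_cvgP; apply: cauchy_exP => e e0.
  have [N HN] := H e e0; exists (u N); apply: ex_ev; exists N => n Nn.
  by rewrite -ball_normE /=; apply: HN.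
by move/cvg_ex => [l hl]; exists l.
Qed.

Lemma cvg_seq_lt (u : nat -> V) l : u @ \oo --> l ->
  forall e : R, 0 < e -> exists N, forall n, (N <= n)%N -> `|l - u n| < e.
Proof. by move=> /cvgrPdist_lt H e e0; apply: ev_ex; apply: H. Qed.

Lemma seq_lt_cvg (u : nat -> V) l :
  (forall e : R, 0 < e -> exists N, forall n, (N <= n)%N -> `|l - u n| < e) ->
  u @ \oo --> l.
Proof. by move=> H; apply/cvgrPdist_lt => e e0; apply: ex_ev; apply: H. Qed.

Lemma natinv_small (e : R) : 0 < e -> exists N, forall n, (N <= n)%N -> (n.+1%:R)^-1 < e.
Proof. move=> e0; apply: ev_ex; exact: (@near_infty_natSinv_lt R (PosNum e0)). Qed.

End Seq.
Arguments natinv_small {R e}.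
Arguments cauchy_seq {R V u}.
Arguments cvg_seq_lt {R V u l}.
Arguments seq_lt_cvg {R V u l}.


Section IP.
Context {R : realType} {V : completeNormedModType R} (ip : inner_product V).

Lemma ipDl x y z : ip (x + y) z = ip x z + ip y z. Proof. exact: inner_addl. Qed.
Lemma ipDr x y z : ip x (y + z) = ip x y + ip x z.
Proof. by rewrite inner_sym ipDl !(inner_sym ip _ x). Qed.
Lemma ipZl a x y : ip (a *: x) y = a * ip x y. Proof. exact: inner_scalel. Qed.
Lemma ipZr a x y : ip x (a *: y) = a * ip x y.
Proof. by rewrite inner_sym ipZl inner_sym. Qed.
Lemma ip0l y : ip 0 y = 0.
Proof. by rewrite -(scale0r (0:V)) ipZl mul0r. Qed.
Lemma ip0r y : ip y 0 = 0.
Proof. by rewrite inner_sym ip0l. Qed.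
Lemma ipNl x y : ip (- x) y = - ip x y.
Proof. by rewrite -scaleN1r ipZl mulN1r. Qed.
Lemma ipNr x y : ip x (- y) = - ip x y.
Proof. by rewrite -scaleN1r ipZr mulN1r. Qed.
Lemma ipBl x y z : ip (x - y) z = ip x z - ip y z.
Proof. by rewrite ipDl ipNl. Qed.
Lemma ipBr x y z : ip x (y - z) = ip x y - ip x z.
Proof. by rewrite ipDr ipNr. Qed.
Lemma nrm2 x : `|x| ^+ 2 = ip x x. Proof. exact: inner_norm. Qed.
Lemma ip_ge0 x : 0 <= ip x x. Proof. by rewrite -nrm2 sqr_ge0. Qed.

Lemma nrmD2 x y : `|x + y| ^+ 2 = `|x| ^+ 2 + 2 * ip x y + `|y| ^+ 2.
Proof. rewrite !nrm2 !(ipDl, ipDr) (inner_sym ip y x); ring. Qed.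
Lemma nrmB2 x y : `|x - y| ^+ 2 = `|x| ^+ 2 - 2 * ip x y + `|y| ^+ 2.
Proof. rewrite !nrm2 !(ipBl, ipBr) (inner_sym ip y x); ring. Qed.

Lemma cvx_id (t : R) (a b : V) : `|(1 - t) *: a + t *: b| ^+ 2 =
  (1 - t) * `|a| ^+ 2 + t * `|b| ^+ 2 - t * (1 - t) * `|a - b| ^+ 2.
Proof.
rewrite !nrm2 !(ipDl, ipDr, ipBl, ipBr, ipZl, ipZr, ipNl, ipNr) (inner_sym ip b a); ring.
Qed.

Lemma CS2 x y : ip x y ^+ 2 <= `|x| ^+ 2 * `|y| ^+ 2.
Proof.
have [->|y0] := eqVneq y 0.
  by rewrite ip0r normr0 !expr2 !mul0r mulr0.
have := ip_ge0 (`|y| ^+ 2 *: x - ip x y *: y).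
rewrite !(ipDl, ipDr, ipBl, ipBr, ipZl, ipZr, ipNl, ipNr) -!nrm2 (inner_sym ip y x) => h.
have yp : 0 < `|y| ^+ 2 by rewrite exprn_gt0 // normr_gt0.
have : 0 <= `|y| ^+ 2 * (`|x| ^+ 2 * `|y| ^+ 2 - ip x y ^+ 2) by lra.
by rewrite pmulr_rge0 // subr_ge0.
Qed.

Lemma CS x y : `|ip x y| <= `|x| * `|y|.
Proof.
have := CS2 x y; rewrite -exprMn => h.
rewrite -(ler_pXn2r (n:=2)) ?nnegrE ?mulr_ge0 //.
by rewrite real_normK // num_real.
Qed.


Lemma cvx_comb_sub (t:R) (x p q : V) :
  (1 - t) *: (x - p) + t *: (x - q) = x - ((1 - t) *: p + t *: q).
Proof. by rewrite !scalerBr opprD addrACA -scalerDl subrK scale1r. Qed.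

Lemma sqr_lt (a e : R) : 0 <= a -> 0 < e -> a ^+ 2 < e ^+ 2 -> a < e.
Proof. move=> a0 e0 h; nra. Qed.

Lemma proj_exists (C : set V) : closed C -> convex C -> C !=set0 -> forall x : V,
  exists c, C c /\ forall w, C w -> `|x - c| <= `|x - w|.
Proof.
move=> Ccl Ccv [c0 Cc0] x.
pose D := [set r | exists2 c, C c & r = `|x - c|].
have D0 : D !=set0 by exists `|x - c0|, c0.
have Dlb : has_lbound D by exists 0 => r [c _ ->].
have Dinf : has_inf D by split.
set d := inf D.
have d0 : 0 <= d by apply: lb_le_inf => // r [c _ ->].
have dle : forall w, C w -> d <= `|x - w|.
  by move=> w Cw; apply: ge_inf => //; exists w.
have hc : forall n : nat, exists c, C c /\ `|x - c| < d + n.+1%:R^-1.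
  move=> n; have [|r [c Cc ->] hr] := @inf_adherent _ _ (n.+1%:R^-1) _ Dinf.
    by rewrite invr_gt0.
  by exists c.
have [c hcn] := choice hc.
have cau : forall e : R, 0 < e -> exists N, forall m n, (N <= m)%N -> (N <= n)%N ->
     `|c m - c n| < e.
  move=> e e0.
  have dd : 0 < e ^+ 2 / (8 * (d + 1)) by apply: divr_gt0; [exact: exprn_gt0|lra].
  have [N HN] := natinv_small dd.
  exists N => m n Nm Nn.
  have hmid : C ((1 - 1/2) *: c m + (1/2) *: c n).
    by apply: Ccv; [case: (hcn m)|case: (hcn n)|apply/andP; split; lra].
  have := dle _ hmid; rewrite -cvx_comb_sub => hM.
  have id := cvx_id (1/2) (x - c m) (x - c n).
  have e1 : (x - c m) - (x - c n) = c n - c m by rewrite opprB addrC addrA subrK.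
  rewrite e1 (distrC (c n)) in id.
  have [_ hm] := hcn m; have [_ hn] := hcn n.
  have im := HN m Nm; have jn := HN n Nn.
  have im0 : (0 : R) < (m.+1%:R : R)^-1 by rewrite invr_gt0 ltr0n.
  have jn0 : (0 : R) < (n.+1%:R : R)^-1 by rewrite invr_gt0 ltr0n.
  have im1 : (m.+1%:R : R)^-1 <= 1 by rewrite invf_le1 ?ler1n ?ltr0n.
  have jn1 : (n.+1%:R : R)^-1 <= 1 by rewrite invf_le1 ?ler1n ?ltr0n.
  set i := m.+1%:R^-1 in hm im im0 im1.
  set j := n.+1%:R^-1 in hn jn jn0 jn1.
  set A := `|x - c m| in hm id.
  set B := `|x - c n| in hn id.
  set M := `|_| in hM id.
  set Q := `|c m - c n| in id *.
  have A0 : 0 <= A by apply: normr_ge0.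
  have B0 : 0 <= B by apply: normr_ge0.
  have Q0 : 0 <= Q by apply: normr_ge0.
  have hdel : e ^+ 2 / (8 * (d + 1)) * (8 * (d + 1)) = e ^+ 2.
    by rewrite divfK //; lra.
  apply: sqr_lt => //.
  have hA2 : A ^+ 2 <= (d + i) ^+ 2 by nra.
  have hB2 : B ^+ 2 <= (d + j) ^+ 2 by nra.
  have hM2 : d ^+ 2 <= M ^+ 2 by nra.
  have hQ : Q ^+ 2 <= 4 * d * (i + j) + 2 * i ^+ 2 + 2 * j ^+ 2 by nra.
  have hij : 4 * d * (i + j) + 2 * i ^+ 2 + 2 * j ^+ 2 <= (4 * d + 2) * (i + j) by nra.
  set del := e ^+ 2 / (8 * (d + 1)) in im jn hdel.
  nra.
have [l hl] := cauchy_seq cau.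
exists l; split.
  apply: (closed_cvg _ Ccl _ _ hl); apply: ex_ev; exists 0%N => n _.
  by case: (hcn n).
move=> w Cw; apply/ler_addgt0Pr => e e0.
have e2 : 0 < e / 2 by lra.
have [N1 HN1] := cvg_seq_lt hl _ e2.
have [N2 HN2] := natinv_small e2.
set n := maxn N1 N2.
have := HN1 n (leq_maxl _ _); have := HN2 n (leq_maxr _ _).
have [_ hn] := hcn n; have := dle _ Cw.
have tri : `|x - l| <= `|x - c n| + `|l - c n|.
  have -> : x - l = (x - c n) + (c n - l) by rewrite addrA subrK.
  by rewrite (distrC l); apply: ler_normD.
move=> h1 h2 h3. apply: (le_trans tri); rewrite [e]splitr addrA; apply: lerD; last exact: ltW.
apply: (le_trans (ltW hn)); by apply: lerD; [|exact: ltW].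
Qed.


Lemma le_eps (a b : R) : (forall e : R, 0 < e -> a <= b + e) -> a <= b.
Proof. by move=> h; apply/ler_addgt0Pr => e e0; exact: h. Qed.

Lemma metric_projP (C : set V) x : closed C -> convex C -> C !=set0 ->
  C (metric_proj C x) /\ forall w, C w -> `|x - metric_proj C x| <= `|x - w|.
Proof.
move=> Ccl Ccv C0; have [c hc] := @proj_exists C Ccl Ccv C0 x.
rewrite /metric_proj; apply: (@xgetPex _ 0 [set z | C z /\ _]); by exists c.
Qed.

Lemma cvx_sub2 (t : R) (x c w : V) :
  x - ((1 - t) *: c + t *: w) = (x - c) - t *: (w - c).
Proof.
by rewrite scalerBl scale1r scalerBr !opprD !opprK !addrA addrAC.
Qed.

Lemma proj_var (C : set V) x c : convex C -> C c ->
  (forall w, C w -> `|x - c| <= `|x - w|) -> forall w, C w -> ip (x - c) (w - c) <= 0.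
Proof.
move=> Ccv Cc hc w Cw.
set A := ip (x - c) (w - c); set B := `|w - c| ^+ 2.
have B0 : 0 <= B by apply: sqr_ge0.
have key : forall t, 0 < t -> t <= 1 -> 2 * A <= t * B.
  move=> t t0 t1; have := hc _ (Ccv c w t Cc Cw _).
  rewrite t1 ltW //= cvx_sub2 => /(_ isT) h.
  have h2 : `|x - c| ^+ 2 <= `|x - c - t *: (w - c)| ^+ 2.
    by rewrite ler_pXn2r // nnegrE.
  rewrite (nrmB2 (x - c)) ipZr -/A normrZ exprMn ger0_norm ?(ltW t0) // -/B in h2.
  nra.
rewrite leNgt; apply/negP => A0.
have AB : 0 < A + B by lra.
have := key (A / (A + B)) (divr_gt0 A0 AB) _.
rewrite ler_pdivrMr // mul1r lerDl B0 => /(_ isT) h.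
have e : A / (A + B) * (A + B) = A by rewrite divfK //; lra.
nra.
Qed.


Lemma riesz (f : V -> R) (K : R) :
  (forall w1 w2, f (w1 + w2) = f w1 + f w2) ->
  (forall (c : R) w, f (c *: w) = c * f w) ->
  (forall w, `|f w| <= K * `|w|) -> exists z, forall w, f w = ip z w.
Proof.
move=> fD fZ fK.
have f0 : f 0 = 0 by rewrite -(scale0r (0 : V)) fZ mul0r.
have fN : forall w, f (- w) = - f w by move=> w; rewrite -scaleN1r fZ mulN1r.
have fB : forall w1 w2, f (w1 - w2) = f w1 - f w2 by move=> w1 w2; rewrite fD fN.
case: (pselect (forall w, f w = 0)) => [h0|].
  by exists 0 => w; rewrite ip0l h0.
move=> /existsNP [u fu].
have K0 : 0 < K.
  have := fK u; have : 0 < `|f u| by rewrite normr_gt0; apply/eqP.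
  have : 0 <= `|u| by apply: normr_ge0.
  move=> h1 h2 h3; nra.
pose N := [set w | f w = 0].
have Ncl : closed N.
  move=> p clp; rewrite /N /=; apply/eqP; rewrite -normr_le0.
  apply: le_eps => e e0; rewrite add0r.
  have eK : 0 < e / K by apply: divr_gt0.
  have [q [Nq bq]] := clp _ (nbhsx_ballx p _ eK).
  move: bq; rewrite -ball_normE /= => bq.
  have : `|f (p - q)| <= K * `|p - q| by apply: fK.
  rewrite fB Nq subr0 => h.
  apply: (le_trans h); rewrite -ler_pdivlMl //; rewrite mulrC; exact: ltW.
have Ncv : convex N.
  by move=> p q t Np Nq _; rewrite /N /= fD !fZ Np Nq !mulr0 addr0.
have [q [Nq hq]] := @proj_exists N Ncl Ncv (ex_intro _ 0 f0) u.
set e := u - q.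
have fe : f e = f u by rewrite /e fB Nq subr0.
have fe0 : f e != 0 by apply/eqP; rewrite fe.
have orth : forall m, N m -> ip e m = 0.
  move=> m Nm.
  have h1 := proj_var _ _ _ Ncv Nq hq (q + m) _.
  have h2 := proj_var _ _ _ Ncv Nq hq (q - m) _.
  have E1 : q + m - q = m by rewrite addrC addKr.
  have E2 : q - m - q = - m by rewrite addrC addKr.
  rewrite E1 in h1; rewrite E2 ipNr in h2.
  have n1 : N (q + m) by rewrite /N /= fD Nq Nm addr0.
  have n2 : N (q - m) by rewrite /N /= fB Nq Nm subr0.
  move: (h1 n1) (h2 n2); rewrite -/e; lra.
have key : forall w, ip e w = f w / f e * ip e e.
  move=> w; set m := w - (f w / f e) *: e.
  have Nm : N m by rewrite /N /= /m fB fZ divfK // subrr.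
  have := orth m Nm; rewrite /m ipBr ipZr => /eqP; rewrite subr_eq0 => /eqP.
  done.
have ee : ip e e != 0.
  rewrite -nrm2 sqrf_eq0 normr_eq0; apply/eqP => e0; move: fe0; rewrite e0 f0 eqxx //.
exists ((f e / ip e e) *: e) => w.
rewrite ipZl (key w); field.
by rewrite fe0 ee.
Qed.
End IP.

Lemma liminf_pos (R : realType) (w : nat -> R) :
  (forall n, 0 <= w n <= 1) -> 0 < limn_inf w ->
  exists c, 0 < c /\ exists N, forall n, (N <= n)%N -> c <= w n.
Proof.
move=> wb.
have bw : bounded_fun w.
  exists 1; split => // M M1 n _ /=; have /andP[h0 h1] := wb n.
  by rewrite ger0_norm // (le_trans h1) // ltW.
rewrite limn_infE // => s0.
have lb : forall n, has_lbound (sdrop w n).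
  by move=> n; exists 0 => r [k _ <-]; case/andP: (wb k).
have hs : has_sup (range (infs w)).
  split; first by exists (infs w 0%N), 0%N.
  exists 1 => r [n _ <-]; rewrite /infs /=.
  apply: (le_trans (ge_inf (lb n) _)); first by exists n => /=.
  by case/andP: (wb n).
have [r [n _ <-] hr] := sup_adherent (eps := sup (range (infs w)) / 2) (divr_gt0 s0 (ltr0Sn _ 1)) hs.
exists (sup (range (infs w)) / 2); split; first by rewrite divr_gt0 // (ltr0Sn _ 1).
exists n => m nm; apply: (le_trans (ltW _)); last first.
  by apply: (ge_inf (lb n)); exists m.
move: hr; set s := sup _; lra.
Qed.

Lemma mono_cauchy (R : realType) (D : nat -> R) :
  (forall n, D n.+1 <= D n) -> (forall n, 0 <= D n) ->
  forall e : R, 0 < e -> exists N, forall n m, (N <= n)%N -> (n <= m)%N -> D n - D m < e.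
Proof.
move=> Dd D0 e e0.
have Dni : nonincreasing_seq D by apply/nonincreasing_seqP.
have lb : has_lbound (range D) by exists 0 => r [n _ <-].
have hl := nonincreasing_cvgn Dni lb.
have [N HN] := cvg_seq_lt hl _ e0.
exists N => n m Nn nm.
have h1 := HN n Nn.
have h2 : inf (D @` setT) <= D m by apply: ge_inf => //; exists m.
have h3 : D m <= D n by apply: Dni.
move: h1; rewrite ltr_distlC; set l := inf _ in h2 *; lra.
Qed.

Module WM.
Import ArrowAsProduct.
Section W.
Context {R : realType} {V : completeNormedModType R} (ip : inner_product V).

Lemma cpt_A (M : R) :
  compact [set f : V -> R | forall w, `[- (M * `|w|), M * `|w|]%classic (f w)].
Proof.
exact: (@tychonoff V (fun _ => R) (fun w => `[- (M * `|w|), M * `|w|]%classic)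
  (fun w => @segment_compact R _ _)).
Qed.

Lemma nbhs_coord (f : V -> R) w (e : R) : 0 < e ->
  nbhs f [set g : V -> R | `|g w - f w| < e].
Proof.
move=> e0; have := @proj_continuous V (fun _ => R) w f (ball (f w) e) (nbhsx_ballx _ _ e0).
rewrite /= nbhs_simpl => h.
have hs : (proj w @^-1` ball (f w) e) `<=` [set g : V -> R | `|g w - f w| < e].
  by move=> g /=; rewrite -ball_normE /= distrC.
exact: (filterS hs h).
Qed.

Lemma weak_cluster (x : nat -> V) (M : R) (P : nat -> Prop) :
  (forall n, `|x n| <= M) -> (forall N, exists n, (N <= n)%N /\ P n) ->
  exists z : V, forall w (e : R) N, 0 < e ->
    exists n, (N <= n)%N /\ P n /\ `|ip (x n) w - ip z w| < e.
Proof.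
move=> xM Pinf.
pose B := fun N => [set n | (N <= n)%N /\ P n].
have FnF : ProperFilter (filter_from setT B).
  apply: filter_from_proper; last first.
    by move=> N _; have [n hn] := Pinf N; exists n.
  apply: filter_from_filter; first by exists 0%N.
  move=> i j _ _; exists (maxn i j) => // n [].
  by rewrite geq_max => /andP[h1 h2] Pn; split; split.
pose ev := fun n => (fun w => ip (x n) w) : V -> R.
pose G := ev @ (filter_from setT B).
have GF : ProperFilter G by apply: fmap_proper_filter.
pose A := [set f : V -> R | forall w, `[- (M * `|w|), M * `|w|]%classic (f w)].
have GA : G A.
  exists 0%N => // n _ w /=; rewrite in_itv /= -ler_norml.
  apply: (le_trans (CS ip _ _)); apply: ler_wpM2r => //.
have [f [Af clf]] := cpt_A M G GF GA.
have close3 : forall w1 w2 w3 (e : R) N, 0 < e -> exists n, (N <= n)%N /\ P n /\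
    `|ip (x n) w1 - f w1| < e /\ `|ip (x n) w2 - f w2| < e /\ `|ip (x n) w3 - f w3| < e.
  move=> w1 w2 w3 e N e0.
  have nb : nbhs f ([set g : V -> R | `|g w1 - f w1| < e] `&`
      ([set g : V -> R | `|g w2 - f w2| < e] `&` [set g : V -> R | `|g w3 - f w3| < e])).
    by apply: filterI; [|apply: filterI]; apply: nbhs_coord.
  have GX : G [set g | exists n, B N n /\ g = ev n].
    by exists N => // n Bn /=; exists n.
  have [g [[n [[Nn Pn] ->]] [h1 [h2 h3]]]] := clf _ _ GX nb.
  by exists n.
have fD : forall w1 w2, f (w1 + w2) = f w1 + f w2.
  move=> w1 w2; apply/eqP; rewrite -subr_eq0 -normr_le0; apply: le_eps => e e0.
  have e3 : 0 < e / 3 by lra.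
  have [n [_ [_ [h1 [h2 h3]]]]] := close3 (w1 + w2) w1 w2 _ 0%N e3.
  rewrite ipDr in h1.
  move: h1 h2 h3; rewrite !ltr_distlC add0r ler_norml => /andP[h1 h1'] /andP[h2 h2'] /andP[h3 h3'].
  apply/andP; split; lra.
have fZ : forall (c : R) w, f (c *: w) = c * f w.
  move=> c w; apply/eqP; rewrite -subr_eq0 -normr_le0; apply: le_eps => e e0.
  have c1 : 0 < `|c| + 1 by have := normr_ge0 c; lra.
  have e' : 0 < e / (2 * (`|c| + 1)) by apply: divr_gt0 => //; lra.
  have [n [_ [_ [h1 [h2 _]]]]] := close3 (c *: w) w w _ 0%N e'.
  rewrite ipZr in h1.
  have h4 : `|c * (ip (x n) w - f w)| <= `|c| * (e / (2 * (`|c| + 1))).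
    by rewrite normrM; apply: ler_wpM2l => //; apply: ltW.
  have h5 : `|c| * (e / (2 * (`|c| + 1))) + e / (2 * (`|c| + 1)) <= e.
    have -> : `|c| * (e / (2 * (`|c| + 1))) + e / (2 * (`|c| + 1)) =
       e / 2 by field; lra.
    lra.
  move: h1 h4; set t := e / _ in h5 *.
  rewrite add0r ltr_distlC !ler_norml => /andP[h1 h1'] /andP[h4 h4'].
  apply/andP; split; nra.
have fK : forall w, `|f w| <= M * `|w|.
  by move=> w; have := Af w; rewrite /= in_itv /= -ler_norml.
have [z hz] := riesz ip (f : V -> R) M fD fZ fK.
exists z => w e N e0.
have [n [Nn [Pn [h _]]]] := close3 w w w e N e0.
by exists n; rewrite -hz.
Qed.
End W.
End WM.
Import WM.

Section Main.
Variables (R : realType) (V : completeNormedModType R)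
  (ip : inner_product V) (E : set V)
  (hE0 : E !=set0) (hEcl : closed E) (hEcv : convex E)
  (S : V -> V) (hSE : forall z, E z -> E (S z))
  (lam gam : R) (hS : gen_hybrid E S lam gam)
  (hF : exists z, E z /\ S z = z)
  (alpha : R) (a : nat -> R) (halpha : 0 < alpha)
  (ha : forall n, alpha <= a n <= 1)
  (b : R) (hb : 0 < b < 1) (beta : nat -> R)
  (hbeta : forall n, b <= beta n <= 1)
  (hliminf : 0 < limn_inf (fun n => beta n * (1 - beta n)))
  (x0 : V) (hx0E : E x0) (x u y : nat -> V)
  (hx0 : x 0%N = x0)
  (hu : forall n, E (u n) /\ forall z, E z -> 0 <= ip (z - u n) (u n - x n))
  (hy : forall n, y n = (1 - beta n) *: x n + beta n *: S (u n))
  (hx : forall n, x n.+1 = (1 - a n) *: x n + a n *: S (y n)).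

Let F := E `&` fixpts S.

Lemma qne2 z p : E z -> F p -> `|p - S z| ^+ 2 <= `|p - z| ^+ 2.
Proof.
move=> Ez [Ep Sp]; have := hS p z Ep Ez; rewrite /fixpts /= in Sp; rewrite Sp.
set X := `|p - S z| ^+ 2; set Y := `|p - z| ^+ 2.
have -> : lam * X + (1 - lam) * X = X by ring.
have -> : gam * Y + (1 - gam) * Y = Y by ring.
by [].
Qed.

Lemma qne z p : E z -> F p -> `|p - S z| <= `|p - z|.
Proof. by move=> Ez Fp; rewrite -(ler_pXn2r (n:=2)) ?nnegrE // qne2. Qed.

Lemma a01 n : 0 <= a n <= 1.
Proof. by have /andP[h1 h2] := ha n; rewrite h2 (le_trans (ltW halpha)). Qed.
Lemma beta01 n : 0 <= beta n <= 1.
Proof. by have /andP[h1 h2] := hbeta n; case/andP: hb => b0 _; rewrite h2 (le_trans (ltW b0)). Qed.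

Lemma xE_uE n : E (x n) /\ u n = x n.
Proof.
have uxP : forall n, E (x n) -> u n = x n.
  move=> k Exk; have [_ h] := hu k; have := h _ Exk.
  rewrite -opprB ipNl -nrm2 oppr_ge0 => h2.
  apply/eqP; rewrite -subr_eq0 -normr_eq0; apply/eqP.
  by apply/eqP; rewrite -sqrf_eq0 eq_le h2 sqr_ge0.
elim: n => [|n [IH1 IH2]]; first by split; [rewrite hx0 | apply: uxP; rewrite hx0].
have Eyn : E (y n).
  rewrite hy; apply: hEcv => //; last exact: beta01.
  by apply: hSE; case: (hu n).
have Exn : E (x n.+1).
  by rewrite hx; apply: hEcv => //; [exact: hSE | exact: a01].
by split => //; apply: uxP.
Qed.

Lemma xE n : E (x n). Proof. by case: (xE_uE n). Qed.
Lemma uE n : u n = x n. Proof. by case: (xE_uE n). Qed.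
Lemma yE n : E (y n).
Proof. by rewrite hy uE; apply: hEcv; [exact: xE| apply: hSE; exact: xE| exact: beta01]. Qed.

Lemma fejer n p : F p ->
  `|p - x n.+1| ^+ 2 <= `|p - x n| ^+ 2
     - a n * (beta n * (1 - beta n)) * `|x n - S (x n)| ^+ 2.
Proof.
move=> Fp.
have h1 := cvx_id ip (a n) (p - x n) (p - S (y n)).
rewrite cvx_comb_sub -hx in h1.
have h2 := cvx_id ip (beta n) (p - x n) (p - S (x n)).
have hy' : y n = (1 - beta n) *: x n + beta n *: S (x n) by rewrite hy uE.
rewrite cvx_comb_sub -hy' in h2.
have e : p - x n - (p - S (x n)) = - (x n - S (x n)).
  by rewrite opprB addrC addrA subrK opprB.
rewrite e normrN in h2.
have q1 := qne2 _ _ (yE n) Fp.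
have q2 := qne2 _ _ (xE n) Fp.
have /andP[a0 a1] := a01 n; have /andP[b0 b1] := beta01 n.
set A := `|p - x n| ^+ 2 in h1 h2 q2 *.
set B := `|p - S (y n)| ^+ 2 in h1 q1.
set C := `|p - y n| ^+ 2 in h2 q1.
set D := `|p - S (x n)| ^+ 2 in h2 q2.
set Q := `|x n - S (x n)| ^+ 2 in h2 *.
set P := `|p - S (y n) - (p - S (y n))| in h1.
rewrite h1.
have P0 : 0 <= `|p - x n - (p - S (y n))| ^+ 2 by apply: sqr_ge0.
have Q0 : 0 <= Q by apply: sqr_ge0.
have hbD : beta n * D <= beta n * A by apply: ler_wpM2l.
have hC : C <= A - beta n * (1 - beta n) * Q by rewrite h2; nra.
have hB : a n * B <= a n * C by apply: ler_wpM2l.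
have hC' : a n * C <= a n * (A - beta n * (1 - beta n) * Q) by apply: ler_wpM2l.
have hP : 0 <= a n * (1 - a n) * `|p - x n - (p - S (y n))| ^+ 2.
  by apply: mulr_ge0 => //; apply: mulr_ge0 => //; lra.
nra.
Qed.


Lemma bprod n : 0 <= beta n * (1 - beta n).
Proof. by have /andP[b0 b1] := beta01 n; apply: mulr_ge0 => //; lra. Qed.

Lemma fejer_step n p : F p -> `|p - x n.+1| <= `|p - x n|.
Proof.
move=> Fp; rewrite -(ler_pXn2r (n:=2)) ?nnegrE //.
apply: (le_trans (fejer n p Fp)); rewrite gerBl.
apply: mulr_ge0; [apply: mulr_ge0; [by case/andP: (a01 n)|exact: bprod]|exact: sqr_ge0].
Qed.

Lemma fejer_sq n p : F p -> `|p - x n.+1| ^+ 2 <= `|p - x n| ^+ 2.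
Proof. by move=> Fp; rewrite ler_pXn2r ?nnegrE // fejer_step. Qed.

Lemma fejer_mono p n m : F p -> (n <= m)%N -> `|p - x m| <= `|p - x n|.
Proof.
move=> Fp; have : nonincreasing_seq (fun k => `|p - x k|).
  by apply/nonincreasing_seqP => k; apply: fejer_step.
by move=> h nm; apply: h.
Qed.

Lemma F0 : F !=set0.
Proof. by case: hF => z [Ez Sz]; exists z; split. Qed.

Lemma asym_reg : forall e : R, 0 < e -> exists N, forall n, (N <= n)%N ->
  `|x n - S (x n)| < e.
Proof.
move=> e e0; have [p Fp] := F0.
have [c [c0 [N1 HN1]]] : exists c, 0 < c /\ exists N, forall n, (N <= n)%N ->
    c <= beta n * (1 - beta n).
  apply: liminf_pos hliminf => n; rewrite bprod /=.
  by have /andP[b0 b1] := beta01 n; nra.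
have del0 : 0 < alpha * c * e ^+ 2 by rewrite !mulr_gt0 // exprn_gt0.
have [N2 HN2] := @mono_cauchy R (fun n => `|p - x n| ^+ 2)
  (fun n => fejer_sq n p Fp) (fun n => sqr_ge0 _) _ del0.
exists (maxn N1 N2) => n; rewrite geq_max => /andP[n1 n2].
have h1 := HN2 n n.+1 n2 (leqnSn n); have h2 := HN1 n n1.
have h3 := fejer n p Fp; have /andP[a1 _] := ha n.
apply: sqr_lt => //; move: h1 h2 h3 a1.
set A := `|p - x n| ^+ 2; set A' := `|p - x n.+1| ^+ 2.
set Q := `|x n - S (x n)| ^+ 2; set B := beta n * (1 - beta n).
have Q0 : 0 <= Q by apply: sqr_ge0.
move=> h1 h2 h3 a1.
have h4 : alpha * c <= a n * B.
  apply: ler_pM => //; [exact: ltW | exact: ltW].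
have h5 : alpha * c * Q <= a n * B * Q by apply: ler_wpM2r.
have h6 : alpha * c * Q < alpha * c * e ^+ 2 by lra.
by rewrite ltr_pM2l ?mulr_gt0 // in h6.
Qed.


Lemma F_closed : closed F.
Proof.
move=> p clp.
have Ep : E p.
  by apply: hEcl => B nB; have [q [[Eq _] Bq]] := clp B nB; exists q.
split => //; rewrite /fixpts /=.
apply/eqP; rewrite -subr_eq0 -normr_le0; apply: le_eps => e e0.
rewrite add0r.
have e2 : 0 < e / 2 by lra.
have [q [Fq bq]] := clp _ (nbhsx_ballx p _ e2).
move: bq; rewrite -ball_normE /= => bq.
have h := qne _ _ Ep Fq.
have -> : S p - p = (S p - q) + (q - p) by rewrite addrA subrK.
apply: (le_trans (ler_normD _ _)).
rewrite (distrC (S p)) (distrC q p).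
rewrite (distrC q p) in h; lra.
Qed.

Lemma F_convex : convex F.
Proof.
move=> p q t [Ep Sp] [Eq Sq] t01; rewrite /fixpts /= in Sp Sq.
set w := (1 - t) *: p + t *: q.
have Ew : E w by apply: hEcv.
split => //; rewrite /fixpts /=.
have /andP[t0 t1] := t01.
have h := cvx_id ip t (S w - p) (S w - q).
rewrite cvx_comb_sub -/w in h.
have e1 : S w - p - (S w - q) = q - p.
  by rewrite opprB addrC addrA subrK.
rewrite e1 in h.
have hp : p - w = t *: (p - q).
  by rewrite -(cvx_comb_sub t p p q) subrr scaler0 add0r.
have hq : q - w = (1 - t) *: (q - p).
  by rewrite -(cvx_comb_sub t q p q) subrr scaler0 addr0.
have qp := qne _ _ Ew (conj Ep Sp); have qq := qne _ _ Ew (conj Eq Sq).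
rewrite hp normrZ ger0_norm // (distrC p (S w)) (distrC p q) in qp.
rewrite hq normrZ ger0_norm ?subr_ge0 // (distrC q (S w)) in qq.
set P := `|S w - p| in h qp; set Q := `|S w - q| in h qq.
set Dd := `|q - p| in qp qq h.
have P0 : 0 <= P by apply: normr_ge0.
have Q0 : 0 <= Q by apply: normr_ge0.
have D0 : 0 <= Dd by apply: normr_ge0.
have hP2 : P ^+ 2 <= (t * Dd) ^+ 2.
  rewrite ler_pXn2r ?nnegrE //; apply: mulr_ge0 => //.
have hQ2 : Q ^+ 2 <= ((1 - t) * Dd) ^+ 2.
  rewrite ler_pXn2r ?nnegrE //; apply: mulr_ge0 => //; lra.
have hz : `|S w - w| ^+ 2 <= 0.
  rewrite h.
  have h1 : (1 - t) * P ^+ 2 <= (1 - t) * (t * Dd) ^+ 2 by apply: ler_wpM2l => //; lra.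
  have h2 : t * Q ^+ 2 <= t * ((1 - t) * Dd) ^+ 2 by apply: ler_wpM2l.
  nra.
apply/eqP; rewrite -subr_eq0 -normr_eq0 -sqrf_eq0 eq_le hz sqr_ge0 //.
Qed.


Definition pn n := metric_proj F (x n).

Lemma pnP n : F (pn n) /\ forall w, F w -> `|x n - pn n| <= `|x n - w|.
Proof. exact: metric_projP F_closed F_convex F0. Qed.

Lemma pn_var n w : F w -> ip (x n - pn n) (w - pn n) <= 0.
Proof. by have [h1 h2] := pnP n; apply: proj_var F_convex h1 h2 w. Qed.

Lemma pn_dist n m : (n <= m)%N ->
  `|pn m - pn n| ^+ 2 <= `|x n - pn n| ^+ 2 - `|x m - pn m| ^+ 2.
Proof.
move=> nm.
have [Fn _] := pnP n.
have h1 := fejer_mono _ _ _ Fn nm.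
rewrite (distrC (pn n)) (distrC (pn n)) in h1.
have h2 := pn_var m _ Fn.
have e : x m - pn n = (x m - pn m) - (pn n - pn m).
  by rewrite opprB addrA subrK.
have h3 := nrmB2 ip (x m - pn m) (pn n - pn m).
rewrite -e in h3.
have h4 : `|x m - pn n| ^+ 2 <= `|x n - pn n| ^+ 2.
  by rewrite ler_pXn2r ?nnegrE.
rewrite (distrC (pn m)); lra.
Qed.

Lemma pn_cvg : exists v, F v /\ pn @ \oo --> v.
Proof.
set r := fun n => `|x n - pn n| ^+ 2.
have rd : forall n, r n.+1 <= r n.
  move=> n; rewrite /r ler_pXn2r ?nnegrE //.
  have [Fn _] := pnP n; have [_ h] := pnP n.+1.
  apply: (le_trans (h _ Fn)); have := fejer_step n (pn n) Fn.
  by rewrite (distrC (pn n)) (distrC (pn n)).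
have cau : forall e : R, 0 < e -> exists N, forall m n, (N <= m)%N -> (N <= n)%N ->
    `|pn m - pn n| < e.
  move=> e e0.
  have [N HN] := @mono_cauchy R r rd (fun n => sqr_ge0 _) _ (exprn_gt0 2 e0).
  exists N => m n Nm Nn.
  have key : forall i j, (N <= i)%N -> (i <= j)%N -> `|pn j - pn i| < e.
    move=> i j Ni ij; apply: sqr_lt => //.
    exact: (le_lt_trans (pn_dist _ _ ij) (HN i j Ni ij)).
  by case: (leqP m n) => mn; [rewrite distrC; apply: key | apply: key => //; apply: ltnW].
have [v hv] := cauchy_seq cau.
exists v; split => //.
apply: (closed_cvg _ F_closed _ _ hv); apply: ex_ev; exists 0%N => n _.
by case: (pnP n).
Qed.


Lemma small_le0 (X : R) : (forall d : R, 0 < d -> X < d) -> X <= 0.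
Proof. by move=> h; apply: le_eps => e e0; rewrite add0r; apply: ltW; apply: h. Qed.

Lemma sq0 (w : V) : `|w| ^+ 2 <= 0 -> w = 0.
Proof. by move=> h; apply/eqP; rewrite -normr_eq0 -sqrf_eq0 eq_le h sqr_ge0. Qed.

Lemma xbound : exists M, 0 <= M /\ forall n, `|x n| <= M.
Proof.
have [p Fp] := F0.
exists (`|p| + `|p - x 0%N|); split; first by rewrite addr_ge0.
move=> n; have h := fejer_mono _ 0%N n Fp (leq0n n).
have -> : x n = p - (p - x n) by rewrite opprB addrC subrK.
apply: (le_trans (ler_normB _ _)); lra.
Qed.


Lemma vsum (p q r : V) : (p - q) + (q - r) = p - r.
Proof. by rewrite addrA subrK. Qed.

Lemma abs_bound (l t c : R) : `|t| <= c -> - l * t <= `|l| * c.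
Proof.
move=> h; apply: (le_trans (ler_norm _)); rewrite normrM normrN.
by apply: ler_wpM2l.
Qed.

Lemma main_weak v : F v -> pn @ \oo --> v ->
  forall w0, (fun n => ip (x n) w0) @ \oo --> ip v w0.
Proof.
move=> Fv hv w0.
have [M [M0 hM]] := xbound.
apply: seq_lt_cvg => e e0.
case: (pselect (exists N, forall n, (N <= n)%N -> `|ip v w0 - ip (x n) w0| < e)) => // hN.
exfalso.
pose P := fun n => e <= `|ip v w0 - ip (x n) w0|.
have Pinf : forall N, exists n, (N <= n)%N /\ P n.
  move=> N; apply: contrapT => hcon; apply: hN; exists N => n Nn.
  by rewrite ltNge; apply/negP => hle; apply: hcon; exists n.
have [z hz] := weak_cluster ip x M P hM Pinf.
have Ez : E z.
  have [Eq hq] := metric_projP ip E z hEcl hEcv hE0.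
  set q := metric_proj E z in Eq hq.
  have hv' := proj_var ip E z q hEcv Eq hq.
  suff -> : z = q by [].
  apply/eqP; rewrite -subr_eq0; apply/eqP; apply: sq0; apply: small_le0 => d d0.
  have [n [_ [_ hn]]] := hz (z - q) d 0%N d0.
  have h1 := hv' (x n) (xE n).
  rewrite inner_sym ipBl in h1.
  rewrite (nrm2 ip) ipBl.
  by move: hn; rewrite ltr_distlC => /andP[h2 h3]; lra.
have Szz : S z = z.
  have [N1 HN1] := asym_reg 1 ltr01.
  set K := `|lam| + `|gam|; set B := M + `|S z| + `|z|; set C0 := K * (2 * B + 1).
  have K0 : 0 <= K by rewrite addr_ge0.
  have B0 : 0 <= B by rewrite !addr_ge0.
  have C00 : 0 <= C0 by rewrite mulr_ge0 // addr_ge0 // mulr_ge0.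
  apply/eqP; rewrite -subr_eq0; apply/eqP; apply: sq0; rewrite distrC.
  apply: small_le0 => d d0.
  have d3 : 0 < d / 3 by lra.
  have dC : 0 < d / 3 / (C0 + 1) by apply: divr_gt0 => //; lra.
  have [N2 HN2] := asym_reg _ dC.
  have [n [Nn [_ hn]]] := hz (z - S z) (d / 3) (maxn N1 N2) d3.
  move: Nn; rewrite geq_max => /andP[n1 n2].
  have dn1 := HN1 n n1; have dn2 := HN2 n n2.
  have hyb := hS (x n) z (xE n) Ez.
  set dd := S (x n) - x n.
  have e1 : S (x n) - S z = dd + (x n - S z) by rewrite vsum.
  have e2 : S (x n) - z = dd + (x n - z) by rewrite vsum.
  have e3 : x n - S z = (x n - z) + (z - S z) by rewrite vsum.
  rewrite e1 e2 !(nrmD2 ip dd) in hyb.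
  have hX := nrmD2 ip (x n - z) (z - S z); rewrite -e3 in hX.
  rewrite (distrC (x n)) -/dd in dn1 dn2.
  set D := `|dd| in hyb dn1 dn2.
  have D0 : 0 <= D by apply: normr_ge0.
  have bx : `|x n - S z| <= B.
    apply: (le_trans (ler_normB _ _)); have := hM n; have := normr_ge0 z; rewrite /B; lra.
  have bz : `|x n - z| <= B.
    apply: (le_trans (ler_normB _ _)); have := hM n; have := normr_ge0 (S z); rewrite /B; lra.
  have A1 : `|ip dd (x n - S z)| <= D * B.
    apply: (le_trans (CS ip _ _)); apply: ler_wpM2l => //.
  have A2 : `|ip dd (x n - z)| <= D * B.
    apply: (le_trans (CS ip _ _)); apply: ler_wpM2l => //.
  have t1 : - lam * (D ^+ 2 + 2 * ip dd (x n - S z)) <= `|lam| * (D ^+ 2 + 2 * (D * B)).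
    apply: abs_bound; apply: (le_trans (ler_normD _ _)).
    rewrite [`|D ^+ 2|]ger0_norm ?sqr_ge0 // normrM [`|2|]ger0_norm //; lra.
  have t2 : - (- gam) * (D ^+ 2 + 2 * ip dd (x n - z)) <= `|- gam| * (D ^+ 2 + 2 * (D * B)).
    apply: abs_bound; apply: (le_trans (ler_normD _ _)).
    rewrite [`|D ^+ 2|]ger0_norm ?sqr_ge0 // normrM [`|2|]ger0_norm //; lra.
  rewrite normrN opprK in t2.
  have DD : D ^+ 2 <= D by rewrite expr2; apply: ler_piMr => //; apply: ltW.
  have t3 : K * (D ^+ 2 + 2 * (D * B)) <= C0 * D.
    rewrite /C0 -mulrA; apply: ler_wpM2l => //; nra.
  have t4 : C0 * D <= d / 3.
    have : D * (C0 + 1) < d / 3 by rewrite -ltr_pdivlMr //; lra.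
    nra.
  move: hn; rewrite ltr_distlC => /andP[h2 h3].
  rewrite ipBl in hX.
  have t5 : `|lam| * (D ^+ 2 + 2 * (D * B)) + `|gam| * (D ^+ 2 + 2 * (D * B)) = K * (D ^+ 2 + 2 * (D * B)).
    by rewrite /K; ring.
  move: hyb hX; set X := `|x n - S z| ^+ 2; set Y := `|x n - z| ^+ 2.
  set A1' := ip dd (x n - S z); set A2' := ip dd (x n - z).
  move=> hyb hX.
  have : X - Y <= - lam * (D ^+ 2 + 2 * A1') + gam * (D ^+ 2 + 2 * A2') by nra.
  move=> h4; rewrite /A1' /A2' in h4; lra.
have Fz : F z by split.
have zv : z = v.
  apply/eqP; rewrite -subr_eq0; apply/eqP; apply: sq0.
  apply: small_le0 => d d0.
  set C1 := M + `|v| + 1 + `|z - v|.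
  have C10 : 0 <= C1 by rewrite !addr_ge0.
  have d2 : 0 < d / 2 by lra.
  have dC : 0 < d / 2 / (C1 + 1) by apply: divr_gt0 => //; lra.
  have [N1 HN1] := cvg_seq_lt hv _ ltr01.
  have [N2 HN2] := cvg_seq_lt hv _ dC.
  have [n [Nn [_ hn]]] := hz (z - v) (d / 2) (maxn N1 N2) d2.
  move: Nn; rewrite geq_max => /andP[n1 n2].
  have pv1 := HN1 n n1; have pv2 := HN2 n n2.
  rewrite distrC in pv1 pv2.
  have pv := pn_var n z Fz.
  set p := pn n in pv pv1 pv2.
  have id : ip (x n - v) (z - v) =
      ip (x n - p) (z - p) + ip (x n - p) (p - v) + ip (p - v) (z - v).
    by rewrite !(ipBl, ipBr); ring.
  set Dp := `|p - v| in pv1 pv2.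
  have Dp0 : 0 <= Dp by apply: normr_ge0.
  have bxp : `|x n - p| <= M + `|v| + 1.
    apply: (le_trans (ler_normB _ _)).
    have : `|p| <= `|v| + Dp.
      have -> : p = v + (p - v) by rewrite addrC subrK.
      exact: ler_normD.
    have := hM n; lra.
  have i1 : `|ip (x n - p) (p - v)| <= (M + `|v| + 1) * Dp.
    apply: (le_trans (CS ip _ _)); apply: ler_wpM2r => //.
  have i2 : `|ip (p - v) (z - v)| <= Dp * `|z - v|.
    exact: (CS ip _ _).
  have i3 : (M + `|v| + 1) * Dp + Dp * `|z - v| = C1 * Dp by rewrite /C1; ring.
  have i4 : C1 * Dp <= d / 2.
    have : Dp * (C1 + 1) < d / 2 by rewrite -ltr_pdivlMr //; lra.
    nra.
  move: i1 i2; rewrite !ler_norml => /andP[i1 i1'] /andP[i2 i2'].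
  move: hn; rewrite ltr_distlC => /andP[h2 h3].
  rewrite ipBl in id.
  rewrite (nrm2 ip) ipBl.
  lra.
have [n [_ [Pn hn]]] := hz w0 e 0%N e0.
rewrite /P -zv in Pn; rewrite distrC in hn.
by move: Pn; rewrite leNgt hn.
Qed.

Lemma final_main : exists v : V, (E `&` fixpts S) v /\ weak_cvg ip x v /\
    (fun n => metric_proj (E `&` fixpts S) (x n)) @ \oo --> v.
Proof.
have [v [Fv hv]] := pn_cvg.
by exists v; split => //; split => //; exact: main_weak.
Qed.

End Main.

Theorem corollary3p2 (R : realType) (V : completeNormedModType R)
  (ip : inner_product V) (E : set V)
  (hE0 : E !=set0) (hEcl : closed E) (hEcv : convex E)
  (S : V -> V) (hSE : forall z, E z -> E (S z))
  (lam gam : R) (hS : gen_hybrid E S lam gam)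
  (hF : exists z, E z /\ S z = z)
  (alpha : R) (a : nat -> R) (halpha : 0 < alpha)
  (ha : forall n, alpha <= a n <= 1)
  (b : R) (hb : 0 < b < 1) (beta : nat -> R)
  (hbeta : forall n, b <= beta n <= 1)
  (hliminf : 0 < limn_inf (fun n => beta n * (1 - beta n)))
  (x0 : V) (hx0E : E x0) (x u y : nat -> V)
  (hx0 : x 0%N = x0)
  (hu : forall n, E (u n) /\ forall z, E z -> 0 <= ip (z - u n) (u n - x n))
  (hy : forall n, y n = (1 - beta n) *: x n + beta n *: S (u n))
  (hx : forall n, x n.+1 = (1 - a n) *: x n + a n *: S (y n)) :
  exists v : V, (E `&` fixpts S) v /\ weak_cvg ip x v /\
    (fun n => metric_proj (E `&` fixpts S) (x n)) @ \oo --> v.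
Proof.
exact: (@final_main R V ip E hE0 hEcl hEcv S hSE lam gam hS hF alpha a halpha ha b hb beta hbeta hliminf x0 hx0E x u y hx0 hu hy hx).
Qed.
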